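(* Let $R=(\mathbb{Z}_I,\oplus,\otimes)$ be an $I$-based ring and $S=(\mathbb{Z}_L,\oplus,\otimes)$ an $L$-based ring which is a based subring of $R$. Let $N=(\mathbb{Z}_J,\oplus,\otimes)$ be a based $S$-module with basis $J$. If $S$ is divisible in $R$, then the induced $R$-module $\mathrm{Ind}^R_S(N)=R\odot_S N$ is a torsion $R$-module whenever $N$ is a torsion $S$-module.
   Context: For a set $X$, $\mathbb{Z}_X$ is the free $\mathbb{Z}$-module with basis $X$. Let $(I,\mathbbm{1})$ be an involutive pointed set (involution $\alpha\mapsto\overline{\alpha}$). A ring structure on $\mathbb{Z}_I$ is given by constants $N^i_{\alpha,i'}\in\mathbb{N}\cup\{0\}$ with $\alpha\otimes i'=\sum_i N^i_{\alpha,i'} i$ (finite sums); write $i\subset\alpha\otimes i'$ if $N^i_{\alpha,i'}\neq0$. It is $I$-based if $\overline{\alpha\otimes\alpha'}=\overline{\alpha'}\otimes\overline{\alpha}$ and $\mathbbm{1}\subset\overline{\alpha}\otimes\alpha'$ iff $\alpha=\alpha'$. A module structure of $\mathbb{Z}_I$ on $\mathbb{Z}_J$ is given by constants $N^j_{\alpha,j'}\ge0$ with $\alpha\otimes j'=\sum_j N^j_{\alpha,j'}j$; it is $J$-based if $j\subset\alpha\otimes j'\iff j'\subset\overline{\alpha}\otimes j$; co-finite if for all $j,j'$ the set $\{\alpha: j\subset\alpha\otimes j'\}$ is finite; connected if for all $j,j'$ there is $\alpha$ with $j\subset\alpha\otimes j'$; torsion if co-finite and connected. $S$ is a based subring of $R$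 if $L\subset I$ is closed under involution, contains $\mathbbm{1}$, and the products of elements of $L$ only involve elements of $L$. $S$ is divisible in $R$ if $R\cong\bigoplus_{\Omega}S$ as based $S$-modules (an $S$-module isomorphism sending basis elements to basis elements). $\mathrm{Ind}^R_S(N)=R\odot_S N$ is the algebraic tensor product with left $R$-action by multiplication on the first factor. *)

(* Defs.v *)
From HB Require Import structures.
From mathcomp Require Import all_boot all_order all_algebra.
From mathcomp Require Export freeg.

Set Implicit Arguments.
Unset Strict Implicit.
Unset Printing Implicit Defensive.

Import Order.TTheory GRing.Theory Num.Theory.
Local Open Scope ring_scope.

(* Z_X is represented by {freeg X / int}: the free Z-module with basis X.
   Structure constants: for a product/action we give the (finite) formal sum
   alpha (x) x' = \sum_x N^x_{alpha,x'} x  as an element of {freeg X / int};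
   N^x_{alpha,x'} = coeff x (act alpha x'), and "x \subset alpha (x) x'"
   means coeff x (act alpha x') != 0. Products/actions are extended
   Z-bilinearly with fglift. *)

Section BasedRings.
Variable I : choiceType.

Definition nonneg (X : choiceType) (D : {freeg X / int}) : Prop :=
  forall x, 0 <= coeff x D.

Definition involutive_pointed (one : I) (inv : I -> I) : Prop :=
  involutive inv /\ inv one = one.

Definition ring_structure (one : I) (mult : I -> I -> {freeg I / int}) : Prop :=
  [/\ forall a b, nonneg (mult a b),
      forall a b c, fglift (fun e => mult e c) (mult a b)
                    = fglift (mult a) (mult b c),
      forall a, mult one a = << a >> &
      forall a, mult a one = << a >> ].

Definition I_based (one : I) (inv : I -> I) (mult : I -> I -> {freeg I / int}) : Prop :=
  (forall a b i, coeff (inv i) (mult a b) = coeff i (mult (inv b) (inv a))) /\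
  (forall a a', coeff one (mult (inv a) a') != 0 <-> a = a').

Definition based_subring (one : I) (inv : I -> I) (mult : I -> I -> {freeg I / int})
  (Lp : pred I) : Prop :=
  [/\ forall l, Lp l -> Lp (inv l),
      Lp one &
      forall l l' i, Lp l -> Lp l' -> coeff i (mult l l') != 0 -> Lp i ].

Section Modules.
Variable X : choiceType.
(* A : the basis of the acting ring (predT for R, Lp for S) *)
Variables (A : pred I) (act : I -> X -> {freeg X / int}).

Definition module_structure (one : I) (mult : I -> I -> {freeg I / int}) : Prop :=
  [/\ forall a x, A a -> nonneg (act a x),
      forall a b x, A a -> A b ->
        fglift (fun e => act e x) (mult a b) = fglift (act a) (act b x) &
      forall x, act one x = << x >> ].

Definition based_module (inv : I -> I) : Prop :=
  forall a x x', A a -> (coeff x (act a x') != 0 <-> coeff x' (act (inv a) x) != 0).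

Definition cofinite : Prop :=
  forall x x', exists s : seq I, forall a, A a -> coeff x (act a x') != 0 -> a \in s.

Definition connected : Prop :=
  forall x x', exists a, A a /\ coeff x (act a x') != 0.

Definition torsion : Prop := cofinite /\ connected.
End Modules.

(* S (basis Lp) is divisible in R: R is isomorphic, as a based (left)
   S-module, to a direct sum of copies of S indexed by Om, via a bijection
   phi : Om x L -> I of bases which intertwines the S-actions. *)
Definition divisible (mult : I -> I -> {freeg I / int}) (Lp : pred I) : Prop :=
  exists (Om : eqType) (phi : Om * {x : I | Lp x} -> I),
    bijective phi /\
    forall (l : I) (w : Om) (l' : {x : I | Lp x}) (w2 : Om) (l2 : {x : I | Lp x}),
      Lp l ->
      coeff (phi (w2, l2)) (mult l (phi (w, l')))
      = if w2 == w then coeff (val l2) (mult l (val l')) else 0.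

(* The algebraic tensor product R (.)_S N = Z_{I x J} / K, where K is the
   Z-span of the balancing relations (i.l) (x) j - i (x) (l.j). *)
Section Induction.
Variable J : choiceType.
Variables (mult : I -> I -> {freeg I / int}) (Lp : pred I)
          (actN : I -> J -> {freeg J / int}).

Definition tens_rel (i l : I) (j : J) : {freeg (I * J) / int} :=
  fglift (fun i' => << (i', j) >>) (mult i l)
  - fglift (fun j' => << (i, j') >>) (actN l j).

Definition tens_kernel (D : {freeg (I * J) / int}) : Prop :=
  exists s : seq (int * I * I * J),
    all (fun t => Lp t.1.2) s /\
    D = \sum_(t <- s) t.1.1.1 *: tens_rel t.1.1.2 t.1.2 t.2.

Definition tens_eq (D1 D2 : {freeg (I * J) / int}) : Prop := tens_kernel (D1 - D2).

Definition ind_act (a : I) (p : I * J) : {freeg (I * J) / int} :=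
  fglift (fun i' => << (i', p.2) >>) (mult a p.1).

Definition embed (B : choiceType) (bas : B -> I * J) (E : {freeg B / int})
  : {freeg (I * J) / int} := fglift (fun t => << bas t >>) E.

(* the classes of the pure tensors bas t form a Z-basis of R (.)_S N *)
Definition tensor_basis (B : choiceType) (bas : B -> I * J) : Prop :=
  (forall D, exists E : {freeg B / int}, tens_eq D (embed bas E)) /\
  (forall E : {freeg B / int}, tens_eq (embed bas E) 0 -> E = 0).

Definition induced_is_torsion (one : I) : Prop :=
  exists (B : choiceType) (bas : B -> I * J) (actB : I -> B -> {freeg B / int}),
    [/\ tensor_basis bas,
        forall a t, tens_eq (ind_act a (bas t)) (embed bas (actB a t)),
        module_structure predT actB one mult &
        torsion predT actB ].
End Induction.
End BasedRings.

(* Main.v *)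
Require Import Defs.
From HB Require Import structures.
From mathcomp Require Import all_boot all_order all_algebra.
From mathcomp Require Import freeg.
Set Implicit Arguments.
Unset Strict Implicit.
Unset Printing Implicit Defensive.
Import Order.TTheory GRing.Theory Num.Theory.
Local Open Scope ring_scope.

HB.instance Definition _ (K : choiceType) (M : lmodType int) (f : K -> M) :=
  GRing.isAdditive.Build {freeg K / int} M (fglift f) (lift_is_additive f).

Section FG.
Implicit Types (X Y : choiceType).

Lemma fglift_expand X (M : lmodType int) (f : X -> M) (D : {freeg X / int}) :
  fglift f D = \sum_(z <- dom D) coeff z D *: f z.
Proof.
rewrite -{1}(freeg_sumE D) raddf_sum; apply: eq_bigr => z _ /=. exact: liftU.
Qed.

Lemma fgUZ X (c : int) (z : X) : << c *g z >> = c *: << z >>.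
Proof. by apply/eqP/freeg_eqP => x; rewrite coeffZ !coeffU mul1r. Qed.

Lemma fglift_id X (D : {freeg X / int}) : fglift (fun z => << z >>) D = D.
Proof.
rewrite fglift_expand; apply/eqP/freeg_eqP => x; rewrite !raddf_sum /=.
rewrite -[in RHS](freeg_sumE D) raddf_sum; apply: eq_bigr => z _ /=.
by rewrite coeffZ !coeffU mul1r.
Qed.

Lemma fglift1 X (M : lmodType int) (f : X -> M) z : fglift f << z >> = f z.
Proof. by rewrite liftU scale1r. Qed.

Lemma fgliftZ X (M : lmodType int) (f : X -> M) (c : int) D :
  fglift f (c *: D) = c *: fglift f D.
Proof.
by rewrite -[c in LHS]intz scaler_int raddfMz -scaler_int intz.
Qed.

Lemma fglift_comp X Y (M : lmodType int) (g : Y -> M) (f : X -> {freeg Y / int}) D :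
  fglift g (fglift f D) = fglift (fun x => fglift g (f x)) D.
Proof.
rewrite (fglift_expand f) [RHS]fglift_expand raddf_sum; apply: eq_bigr => z _ /=.
by rewrite fgliftZ.
Qed.

Lemma eq_fglift_dom X (M : lmodType int) (f g : X -> M) D :
  {in dom D, f =1 g} -> fglift f D = fglift g D.
Proof.
move=> fg; rewrite !fglift_expand big_seq [RHS]big_seq; apply: eq_bigr => z zD.
by rewrite fg.
Qed.

Lemma fgliftB X (M : lmodType int) (f g : X -> M) D :
  fglift (fun x => f x - g x) D = fglift f D - fglift g D.
Proof.
by rewrite !fglift_expand -sumrB; apply: eq_bigr => z _; rewrite scalerBr.
Qed.

Lemma fglift0f X (M : lmodType int) D : fglift (fun _ : X => (0 : M)) D = 0.
Proof. by rewrite fglift_expand big1 // => z _; rewrite scaler0. Qed.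

Lemma fglift_swap X Y (M : lmodType int) (h : X -> Y -> M) D1 D2 :
  fglift (fun x => fglift (fun y => h x y) D2) D1
  = fglift (fun y => fglift (fun x => h x y) D1) D2.
Proof.
rewrite fglift_expand [RHS]fglift_expand.
under eq_bigr do rewrite fglift_expand scaler_sumr.
under [RHS]eq_bigr do rewrite fglift_expand scaler_sumr.
rewrite exchange_big; apply: eq_bigr => y _; apply: eq_bigr => x _.
by rewrite !scalerA mulrC.
Qed.

Lemma coeff_fglift X Y (f : X -> {freeg Y / int}) D y :
  coeff y (fglift f D) = \sum_(z <- dom D) coeff z D * coeff y (f z).
Proof.
by rewrite fglift_expand raddf_sum; apply: eq_bigr => z _ /=; rewrite coeffZ.
Qed.

Lemma nonneg1 X (z : X) : nonneg << z >>.
Proof. by rewrite /nonneg => x; rewrite coeffU mul1r ler0n. Qed.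

Lemma nonneg_fglift X Y (f : X -> {freeg Y / int}) D :
  nonneg D -> (forall z, nonneg (f z)) -> nonneg (fglift f D).
Proof.
move=> hD hf; rewrite /nonneg => y; rewrite coeff_fglift; apply: sumr_ge0 => z _.
by apply: mulr_ge0; [apply: hD | apply: hf].
Qed.

Lemma sum_pos (T : eqType) (s : seq T) (F : T -> int) x0 :
  (forall x, x \in s -> 0 <= F x) -> x0 \in s -> 0 < F x0 -> 0 < \sum_(x <- s) F x.
Proof.
elim: s => [//|a s IH] hF; rewrite inE big_cons => /orP [/eqP <- | hx] hp.
  apply: (lt_le_trans hp); rewrite lerDl big_seq; apply: sumr_ge0 => x xs.
  by apply: hF; rewrite inE xs orbT.
rewrite ltr_wpDl //; first by apply: hF; rewrite inE eqxx.
by apply: IH => // x xs; apply: hF; rewrite inE xs orbT.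
Qed.

Lemma sum_neq0 (T : eqType) (s : seq T) (F : T -> int) :
  \sum_(x <- s) F x != 0 -> exists2 x, x \in s & F x != 0.
Proof.
move=> h; apply/hasP; apply: contraNT h; rewrite -all_predC => /allP H.
rewrite big_seq big1 // => x xs; move: (H x xs) => /=; by rewrite negbK => /eqP.
Qed.
End FG.

Section Main.
Variables (I J : choiceType) (one : I) (inv : I -> I)
  (mult : I -> I -> {freeg I / int}) (Lp : pred I)
  (actN : I -> J -> {freeg J / int}).
Hypothesis Hinv : involutive inv.
Hypothesis Hnn : forall a b, nonneg (mult a b).
Hypothesis Hass : forall a b c, fglift (fun e => mult e c) (mult a b)
                    = fglift (mult a) (mult b c).
Hypothesis Hone_l : forall a, mult one a = << a >>.
Hypothesis Hone_r : forall a, mult a one = << a >>.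
Hypothesis Hb2 : forall a a', coeff one (mult (inv a) a') != 0 <-> a = a'.
Hypothesis HLone : Lp one.
Hypothesis HLmul : forall l l' i, Lp l -> Lp l' -> coeff i (mult l l') != 0 -> Lp i.
Hypothesis HNnn : forall a x, Lp a -> nonneg (actN a x).
Hypothesis HNass : forall a b x, Lp a -> Lp b ->
        fglift (fun e => actN e x) (mult a b) = fglift (actN a) (actN b x).
Hypothesis HNone : forall x, actN one x = << x >>.
Hypothesis HNcof : cofinite Lp actN.
Hypothesis HNcon : connected Lp actN.
Variables (Om : eqType) (wof : I -> Om) (lof : I -> I) (mk : Om -> I -> I).
Hypothesis Hlof : forall i, Lp (lof i).
Hypothesis Hwmk : forall w l, Lp l -> wof (mk w l) = w.
Hypothesis Hlmk : forall w l, Lp l -> lof (mk w l) = l.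
Hypothesis Hmk : forall i, mk (wof i) (lof i) = i.
Hypothesis HR : forall i k l, Lp l ->
  coeff k (mult i l) = if wof k == wof i then coeff (lof k) (mult (lof i) l) else 0.

Lemma eq_fglift (X : choiceType) (M : lmodType int) (f g : X -> M) D :
  f =1 g -> fglift f D = fglift g D.
Proof. by move=> fg; apply: eq_fglift_dom => z _; apply: fg. Qed.

Lemma HRm i l : Lp l ->
  mult i l = fglift (fun m => << mk (wof i) m >>) (mult (lof i) l).
Proof.
move=> hl; apply/eqP/freeg_eqP => k; rewrite HR // coeff_fglift.
case: eqP => hw.
  rewrite -[in LHS](fglift_id (mult (lof i) l)) coeff_fglift.
  rewrite big_seq [RHS]big_seq; apply: eq_bigr => m hm.
  have Lm : Lp m by apply: (HLmul (Hlof i) hl); rewrite -mem_dom.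
  have hb : (m == lof k) = (mk (wof i) m == k).
    apply/idP/idP => /eqP h; apply/eqP; first by rewrite h -hw Hmk.
    by rewrite -h Hlmk.
  by rewrite !coeffU !mul1r hb.
rewrite big_seq big1 // => m hm.
have Lm : Lp m by apply: (HLmul (Hlof i) hl); rewrite -mem_dom.
rewrite coeffU mul1r; case: eqP => [hk|]; last by rewrite mulr0.
by case: hw; rewrite -hk Hwmk.
Qed.

Definition e i := mk (wof i) one.
Lemma wof_e i : wof (e i) = wof i. Proof. exact: Hwmk. Qed.
Lemma lof_e i : lof (e i) = one. Proof. exact: Hlmk. Qed.
Lemma ee i : e (e i) == e i. Proof. by rewrite /e wof_e. Qed.

Definition E := {i : I | e i == i}.
Definition B := (E * J)%type.
Definition eE i : E := exist _ (e i) (ee i).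
Definition bas (t : B) : I * J := (val t.1, t.2).
Definition pi1 (p : I * J) : {freeg B / int} :=
  fglift (fun j2 => << (eE p.1, j2) >>) (actN (lof p.1) p.2).
Definition Pi := fglift pi1.
Definition actB a (t : B) := Pi (ind_act mult a (bas t)).
Local Notation tk := (tens_kernel mult Lp actN).

Lemma mult_e i l : Lp l -> mult (e i) l = << mk (wof i) l >>.
Proof. by move=> hl; rewrite HRm // wof_e lof_e Hone_l fglift1. Qed.

Lemma valE (b : E) : e (val b) = val b.
Proof. exact: (eqP (valP b)). Qed.

Lemma pi1_bas t : pi1 (bas t) = << t >>.
Proof.
case: t => b j; rewrite /pi1 /bas /=.
have -> : lof (val b) = one by rewrite -valE lof_e.
rewrite HNone fglift1; congr << (_, _) >>; apply: val_inj => /=; exact: valE.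
Qed.

Lemma Pi_embed D : Pi (embed bas D) = D.
Proof.
rewrite /embed /Pi fglift_comp -[RHS]fglift_id; apply: eq_fglift => t.
by rewrite fglift1 pi1_bas.
Qed.

Lemma eE_mk i m : Lp m -> eE (mk (wof i) m) = eE i.
Proof. by move=> hm; apply: val_inj; rewrite /= /e Hwmk. Qed.

Lemma Pi_rel i l j : Lp l -> Pi (tens_rel mult actN i l j) = 0.
Proof.
move=> hl; rewrite /tens_rel /Pi raddfB /= !fglift_comp.
have h1 : fglift (fun x => fglift pi1 << (x, j) >>) (mult i l)
   = fglift (fun j2 => << (eE i, j2) >>) (fglift (actN (lof i)) (actN l j)).
  rewrite HRm // fglift_comp -HNass // [RHS]fglift_comp.
  apply: eq_fglift_dom => m hm.
  have Lm : Lp m by apply: (HLmul (Hlof i) hl); rewrite -mem_dom.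
  by rewrite !fglift1 /pi1 /= eE_mk // Hlmk.
have h2 : fglift (fun x => fglift pi1 << (i, x) >>) (actN l j)
   = fglift (fun j2 => << (eE i, j2) >>) (fglift (actN (lof i)) (actN l j)).
  rewrite [RHS]fglift_comp; apply: eq_fglift => x.
  by rewrite fglift1.
by rewrite h1 h2 subrr.
Qed.

Lemma tk0 : tk 0.
Proof. by exists [::]; rewrite big_nil. Qed.

Lemma tkD D1 D2 : tk D1 -> tk D2 -> tk (D1 + D2).
Proof.
move=> [s1 [h1 ->]] [s2 [h2 ->]]; exists (s1 ++ s2).
by rewrite all_cat h1 h2 big_cat.
Qed.

Lemma tkZ c D : tk D -> tk (c *: D).
Proof.
move=> [s [h ->]]; exists [seq (c * t.1.1.1, t.1.1.2, t.1.2, t.2) | t <- s]; split.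
  by rewrite all_map.
rewrite big_map scaler_sumr; apply: eq_bigr => t _ /=; by rewrite scalerA.
Qed.

Lemma tkB D1 D2 : tk D1 -> tk D2 -> tk (D1 - D2).
Proof. by move=> h1 h2; rewrite -scaleN1r; apply: tkD => //; apply: tkZ. Qed.

Lemma tk_rel i l j : Lp l -> tk (tens_rel mult actN i l j).
Proof. by move=> hl; exists [:: (1, i, l, j)]; rewrite /= hl big_seq1 scale1r. Qed.

Lemma tk_fglift (X : choiceType) (h : X -> {freeg (I * J) / int}) D :
  (forall z, tk (h z)) -> tk (fglift h D).
Proof.
move=> hh; rewrite fglift_expand; elim: (dom D) => [|z s IH].
  by rewrite big_nil; apply: tk0.
by rewrite big_cons; apply: tkD => //; apply: tkZ.
Qed.

Lemma Pi_kernel D : tk D -> Pi D = 0.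
Proof.
move=> [s [h ->]]; rewrite /Pi raddf_sum big_seq big1 // => t ts /=.
by rewrite fgliftZ -/Pi Pi_rel ?scaler0 //; move/allP: h => /(_ t ts).
Qed.

Lemma tk_res D : tk (D - embed bas (Pi D)).
Proof.
have -> : D - embed bas (Pi D)
   = fglift (fun z => << z >> - embed bas (Pi << z >>)) D.
  rewrite fgliftB fglift_id; congr (_ - _).
  by rewrite /embed /Pi !fglift_comp; apply: eq_fglift => z; rewrite fglift1.
apply: tk_fglift => -[i j].
have -> : << (i, j) >> - embed bas (Pi << (i, j) >>) = tens_rel mult actN (e i) (lof i) j.
  rewrite /tens_rel mult_e // Hmk fglift1 /Pi fglift1 /pi1 /embed fglift_comp /=.
  by congr (_ - _); apply: eq_fglift => j2; rewrite fglift1.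
exact: tk_rel.
Qed.

Lemma basis_ok : tensor_basis mult Lp actN bas.
Proof.
split.
  by move=> D; exists (Pi D); apply: tk_res.
move=> D; rewrite /tens_eq subr0 => /Pi_kernel.
by rewrite Pi_embed.
Qed.

Lemma ind_rel a i l j : Lp l ->
  fglift (ind_act mult a) (tens_rel mult actN i l j)
  = fglift (fun k => tens_rel mult actN k l j) (mult a i).
Proof.
move=> hl; rewrite /tens_rel raddfB /= fgliftB !fglift_comp.
congr (_ - _).
  rewrite (eq_fglift _ (g := fun x => fglift (fun k => << (k, j) >>) (mult a x))); last first.
    by move=> x; rewrite fglift1.
  by rewrite -fglift_comp -Hass fglift_comp.
rewrite (eq_fglift _ (g := fun x => fglift (fun k => << (k, x) >>) (mult a i))); last first.
  by move=> x; rewrite fglift1.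
by rewrite fglift_swap.
Qed.

Lemma PiA_kernel a D : tk D -> Pi (fglift (ind_act mult a) D) = 0.
Proof.
move=> [s [h ->]]; rewrite raddf_sum /Pi raddf_sum big_seq big1 // => t ts /=.
move/allP: h => /(_ t ts) ht.
rewrite fgliftZ fgliftZ ind_rel // fglift_comp.
rewrite (eq_fglift _ (g := fun _ => 0)); first by rewrite fglift0f scaler0.
by move=> k; rewrite -/Pi Pi_rel.
Qed.

Lemma ind_eq a t : tens_eq mult Lp actN (ind_act mult a (bas t)) (embed bas (actB a t)).
Proof. exact: tk_res. Qed.

Lemma actB_nonneg a t : nonneg (actB a t).
Proof.
apply: nonneg_fglift.
  by apply: nonneg_fglift => // z; apply: nonneg1.
move=> p; apply: nonneg_fglift; first exact: HNnn.
by move=> z; apply: nonneg1.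
Qed.

Lemma actB_one t : actB one t = << t >>.
Proof.
by rewrite /actB /ind_act Hone_l fglift1 /Pi fglift1 -pi1_bas.
Qed.

Lemma actB_assoc a b x :
  fglift (fun e => actB e x) (mult a b) = fglift (actB a) (actB b x).
Proof.
set p := bas x.
have L : fglift (fun e => actB e x) (mult a b)
       = Pi (fglift (ind_act mult a) (ind_act mult b p)).
  rewrite /actB /Pi -fglift_comp -/Pi; congr (Pi _).
  rewrite /ind_act -fglift_comp Hass fglift_comp [RHS]fglift_comp.
  by apply: eq_fglift => k; rewrite fglift1.
have R : fglift (actB a) (actB b x)
       = Pi (fglift (ind_act mult a) (embed bas (Pi (ind_act mult b p)))).
  rewrite /actB /Pi -fglift_comp -/Pi; congr (Pi _).
  rewrite /embed fglift_comp; apply: eq_fglift => t.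
  by rewrite fglift1.
rewrite L R; apply/eqP; rewrite -subr_eq0 /Pi -raddfB /= -raddfB /= -/Pi.
apply/eqP; apply: PiA_kernel; exact: tk_res.
Qed.

Lemma coeff_tag (X Y : choiceType) (c : X) (D : {freeg Y / int}) b2 j2 :
  coeff (b2, j2) (fglift (fun j3 => << (c, j3) >>) D) = (c == b2)%:R * coeff j2 D.
Proof.
rewrite coeff_fglift -[in RHS](fglift_id D) coeff_fglift mulr_sumr.
apply: eq_bigr => j3 _; rewrite !coeffU !mul1r xpair_eqE.
by case: (c == b2); rewrite ?mul1r ?mul0r ?mulr0.
Qed.

Lemma coeff_actB a (b : E) j b2 j2 :
  coeff (b2, j2) (actB a (b, j))
  = \sum_(k <- dom (mult a (val b)))
      coeff k (mult a (val b)) * ((eE k == b2)%:R * coeff j2 (actN (lof k) j)).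
Proof.
rewrite /actB /ind_act /Pi fglift_comp coeff_fglift /=; apply: eq_bigr => k _.
by rewrite fglift1 /pi1 coeff_tag.
Qed.

Lemma recip a b c : coeff c (mult a b) != 0 -> coeff (inv a) (mult b (inv c)) != 0.
Proof.
move=> h.
have h1 : 0 < coeff one (fglift (fun e => mult e (inv c)) (mult a b)).
  rewrite coeff_fglift; apply: (sum_pos (x0 := c)).
  - by move=> x _; apply: mulr_ge0; [apply: Hnn | apply: Hnn].
  - by rewrite mem_dom.
  apply: mulr_gt0; first by rewrite lt_def h Hnn.
  rewrite lt_def Hnn andbT; rewrite -{1}(Hinv c); exact/Hb2.
rewrite Hass coeff_fglift in h1.
have [e' he] := sum_neq0 (negbT (gt_eqF h1)).
rewrite mulf_eq0 negb_or => /andP [h2 h3].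
have : coeff one (mult (inv (inv a)) e') != 0 by rewrite Hinv.
by move/Hb2 => ->.
Qed.

Lemma exists_left x y : exists a, coeff x (mult a y) != 0.
Proof.
have h1 : 0 < coeff x (fglift (mult x) (mult (inv y) y)).
  rewrite coeff_fglift; apply: (sum_pos (x0 := one)).
  - by move=> z _; apply: mulr_ge0; [apply: Hnn | apply: Hnn].
  - by rewrite mem_dom; apply/Hb2.
  apply: mulr_gt0; first by rewrite lt_def Hnn andbT; apply/Hb2.
  by rewrite Hone_r coeffU eqxx.
rewrite -Hass coeff_fglift in h1.
have [a' _] := sum_neq0 (negbT (gt_eqF h1)).
rewrite mulf_eq0 negb_or => /andP [_ h3].
by exists a'.
Qed.

Lemma actB_torsion : torsion predT actB.
Proof.
split.
  move=> [b2 j2] [b j].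
  have [s0 hs0] := HNcof j2 j.
  exists (flatten [seq map inv (dom (mult (val b) (inv (mk (wof (val b2)) l)))) | l <- s0]).
  move=> a _; rewrite coeff_actB => /sum_neq0 [k hk].
  rewrite !mulf_eq0 !negb_or => /and3P [h1 h2 h3].
  have hkb : e k = val b2.
    by move: h2; rewrite pnatr_eq0 eqb0 negbK => /eqP <-.
  have hw : wof k = wof (val b2) by rewrite -hkb wof_e.
  apply/flatten_mapP; exists (lof k); first exact: hs0.
  rewrite -[a]Hinv; apply: map_f; rewrite mem_dom -hw Hmk; exact: recip.
move=> [b2 j2] [b j].
have [l [hl hlj]] := HNcon j2 j.
set k := mk (wof (val b2)) l.
have [a ha] := exists_left k (val b).
exists a; split => //; rewrite coeff_actB; apply: negbT; apply: gt_eqF.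
apply: (sum_pos (x0 := k)).
- move=> z _; apply: mulr_ge0; first exact: Hnn.
  by apply: mulr_ge0; [apply: ler0n | apply: HNnn].
- by rewrite mem_dom.
have hkb : eE k = b2.
  by apply: val_inj; rewrite /= /e /k Hwmk //; exact: valE.
rewrite hkb eqxx mul1r /k Hlmk //; apply: mulr_gt0; first by rewrite lt_def ha Hnn.
by rewrite lt_def hlj HNnn.
Qed.

Lemma main_sec : induced_is_torsion mult Lp actN one.
Proof.
exists B, bas, actB; split.
- exact: basis_ok.
- exact: ind_eq.
- split => //; [move=> a x _; exact: actB_nonneg | move=> a b x _ _; exact: actB_assoc | exact: actB_one].
- exact: actB_torsion.
Qed.
End Main.

Unset Implicit Arguments.

Theorem lemma3p1 (I J : choiceType) (one : I) (inv : I -> I)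
  (mult : I -> I -> {freeg I / int}) (Lp : pred I)
  (actN : I -> J -> {freeg J / int}) :
  involutive_pointed one inv ->
  ring_structure one mult -> I_based one inv mult ->
  based_subring one inv mult Lp ->
  module_structure Lp actN one mult -> based_module Lp actN inv ->
  divisible mult Lp ->
  torsion Lp actN ->
  induced_is_torsion mult Lp actN one.
Proof.
move=> [Hinv _] [Hnn Hass Hone_l Hone_r] [Hb1 Hb2] [HLinv HLone HLmul]
  [HNnn HNass HNone] _ [Om [phi [[g phiK gK] Hdiv]]] [HNcof HNcon].
pose one' : {x : I | Lp x} := exist _ one HLone.
pose wof i := (g (inv i)).1.
pose lof i := inv (val (g (inv i)).2).
pose mk w l := inv (phi (w, insubd one' (inv l))).
apply: (@main_sec I J one inv mult Lp actN Hinv Hnn Hass Hone_l Hone_r Hb2 HLone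
   HLmul HNnn HNass HNone HNcof HNcon Om wof lof mk).
- by move=> i; apply: HLinv; apply: valP.
- by move=> w l hl; rewrite /wof /mk Hinv phiK.
- by move=> w l hl; rewrite /lof /mk Hinv phiK /= insubdK ?Hinv //; apply: HLinv.
- move=> i; rewrite /mk /wof /lof Hinv valKd.
  by case: (g (inv i)) (gK (inv i)) => w s /= ->; rewrite Hinv.
move=> i k l hl; rewrite /wof /lof.
have hk := gK (inv k); have hi := gK (inv i).
case: (g (inv k)) hk => wk sk hk; case: (g (inv i)) hi => wi si hi /=.
have -> : k = inv (phi (wk, sk)) by rewrite hk Hinv.
have -> : i = inv (phi (wi, si)) by rewrite hi Hinv.
rewrite Hb1 Hinv (Hdiv (inv l)) ?HLinv //.
by case: (wk == wi) => //; rewrite [RHS]Hb1 Hinv.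
Qed.
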